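(* Let $R$ be a commutative ring with unit and let $f,g\in R[q]$ be monic polynomials with $f\Rightarrow_R g$. Then the homomorphism $\rho^R_{(fg),(f)}\colon R[q]^{(fg)}\to R[q]^{(f)}$ induced by the identity of $R[q]$ is injective.
   Context: $q$ is an indeterminate. For an element $h\in R[q]$, $R[q]^{(h)}=\varprojlim_j R[q]/(h)^j$ is the $(h)$-adic completion. For monic $f,g\in R[q]$ write $f\Rightarrow_R g$ if there exist an ideal $I\subset R$ with $\bigcap_{j\ge0}I^j=(0)$ and an integer $m\ge0$ such that $f^m\in(g)+I[q]$. *)

(* Defs.v *)
From HB Require Import structures.
From mathcomp Require Import all_boot all_order all_algebra.
Set Implicit Arguments. Unset Strict Implicit. Unset Printing Implicit Defensive.
Import GRing.Theory.
Local Open Scope ring_scope.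

Section Defs.
Variable R : comNzRingType.

Definition is_ideal (I : R -> Prop) : Prop :=
  [/\ I 0, (forall x y, I x -> I y -> I (x + y)) & (forall r x, I x -> I (r * x))].

(** [ipow I j x] : x belongs to I^j, the additive span of products of j
    elements of I (I^0 = R). *)
Inductive ipow (I : R -> Prop) : nat -> R -> Prop :=
| ipow_O x : ipow I 0 x
| ipow_mul j a b : ipow I j a -> I b -> ipow I j.+1 (a * b)
| ipow_zero j : ipow I j.+1 0
| ipow_add j x y : ipow I j.+1 x -> ipow I j.+1 y -> ipow I j.+1 (x + y).

Definition implies_R (f g : {poly R}) : Prop :=
  exists (I : R -> Prop) (m : nat),
    [/\ is_ideal I,
        (forall x, (forall j, ipow I j x) -> x = 0) &
        exists r h : {poly R}, f ^+ m = r * g + h /\ forall i, I h`_i].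

Definition pcong (h : {poly R}) (j : nat) (p p' : {poly R}) : Prop :=
  exists r : {poly R}, p - p' = r * h ^+ j.

(** Elements of the (h)-adic completion R[q]^(h) = lim_j R[q]/(h)^j are
    represented by compatible sequences of representatives x j of the
    classes in R[q]/(h)^j; two such sequences define the same element iff
    they agree modulo (h)^j for every j. *)
Definition adic_compatible (h : {poly R}) (x : nat -> {poly R}) : Prop :=
  forall j, pcong h j (x j.+1) (x j).

Definition adic_eq (h : {poly R}) (x y : nat -> {poly R}) : Prop :=
  forall j, pcong h j (x j) (y j).

(** rho_{(fg),(f)} sends the class of a compatible sequence (x j) to the
    class of the same sequence (reduced mod f^j, well defined since
    (fg)^j ⊆ (f)^j).  Injectivity of rho. *)
Definition rho_injective (f g : {poly R}) : Prop :=
  forall x y : nat -> {poly R},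
    adic_compatible (f * g) x -> adic_compatible (f * g) y ->
    adic_eq f x y -> adic_eq (f * g) x y.

End Defs.

(* Main.v *)
Require Import Defs.
From mathcomp Require Import all_boot all_order all_algebra.
Local Open Scope ring_scope.
Set Implicit Arguments. Unset Strict Implicit.
Import GRing.Theory.
From mathcomp Require Import ring.

Section Aux.
Variable R : comNzRingType.
Variable I : R -> Prop.

Definition Ep n (p : {poly R}) := forall i, ipow I n p`_i.

Lemma ipow0 n : ipow I n 0.
Proof. case: n => [|n]; [exact: ipow_O | exact: ipow_zero]. Qed.

Lemma ipowD n x y : ipow I n x -> ipow I n y -> ipow I n (x + y).
Proof. case: n => [|n] ? ?; [exact: ipow_O | exact: ipow_add]. Qed.

Lemma ipowMl n r x : ipow I n x -> ipow I n (r * x).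
Proof.
elim=> [z|j a b _ IH Ib| j| j u v _ IHu _ IHv].
- exact: ipow_O.
- by rewrite mulrA; apply: ipow_mul.
- by rewrite mulr0; apply: ipow_zero.
- by rewrite mulrDr; apply: ipow_add.
Qed.

Lemma ipow_sum n (J : Type) (s : seq J) (F : J -> R) :
  (forall i, ipow I n (F i)) -> ipow I n (\sum_(i <- s) F i).
Proof.
move=> H; elim/big_ind: _ => //; [exact: ipow0 | exact: ipowD].
Qed.

Lemma Ep0 n : Ep n 0.
Proof. by move=> i; rewrite coef0; apply: ipow0. Qed.

Lemma EpD n p q : Ep n p -> Ep n q -> Ep n (p + q).
Proof. by move=> Hp Hq i; rewrite coefD; apply: ipowD. Qed.

Lemma EpMl n p q : Ep n q -> Ep n (p * q).
Proof. move=> Hq i; rewrite coefM; apply: ipow_sum => k; exact: ipowMl. Qed.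

Hypothesis idI : is_ideal I.

Lemma I_sum (J : Type) (s : seq J) (F : J -> R) :
  (forall i, I (F i)) -> I (\sum_(i <- s) F i).
Proof.
case: idI => I0 ID _ H; elim/big_ind: _ => //.
Qed.

Definition Ip (p : {poly R}) := forall i, I p`_i.

Lemma IpMl p q : Ip q -> Ip (p * q).
Proof.
case: idI => _ _ IM Hq i; rewrite coefM; apply: I_sum => k; exact: IM.
Qed.

Lemma EpM1 n p q : Ep n p -> Ip q -> Ep n.+1 (p * q).
Proof.
move=> Hp Hq i; rewrite coefM; apply: ipow_sum => k; exact: ipow_mul.
Qed.

Lemma ipowMr n r x : ipow I n x -> ipow I n (x * r).
Proof. by rewrite mulrC; apply: ipowMl. Qed.

Import Pdiv.Ring Pdiv.RingMonic.

Lemma Ep_rmodp n (H W : {poly R}) : H \is monic -> Ep n W -> Ep n (rmodp W H).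
Proof.
move=> mH HW i.
rewrite -(coefK W) poly_def rmodp_sum // coef_sum.
apply: ipow_sum => k; rewrite rmodpZ // coefZ; exact: ipowMr.
Qed.

Lemma lemD (H d : {poly R}) : H \is monic ->
  (forall x, (forall n, ipow I n x) -> x = 0) ->
  (forall n, exists A W, d = A * H + W /\ Ep n W) ->
  exists r, d = r * H.
Proof.
move=> mH Hsep Hd; exists (rdivp d H).
suff h0 : rmodp d H = 0 by rewrite {1}(rdivp_eq mH d) h0 addr0.
apply/polyP => i; rewrite coef0; apply: Hsep => n.
have [A [W [-> HW]]] := Hd n.
rewrite rmodpD // rmodp_mull // add0r.
exact: Ep_rmodp.
Qed.

End Aux.

Lemma compat_le (R : comNzRingType) (h : {poly R}) x :
  adic_compatible h x -> forall j k, (j <= k)%N -> exists r, x k - x j = r * h ^+ j.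
Proof.
move=> Hc j; elim=> [|k IH] Hjk.
  by move: Hjk; rewrite leqn0 => /eqP ->; exists 0; rewrite subrr mul0r.
case: (leqP j k) => Hjk'.
  have [r Hr] := IH Hjk'.
  have [r1 Hr1] := Hc k.
  exists (r1 * h ^+ (k - j) + r).
  rewrite -(subrK (x k) (x k.+1)) -addrA Hr Hr1 mulrDl -mulrA -exprD subnK //.
have -> : j = k.+1 by apply/eqP; rewrite eqn_leq Hjk.
by exists 0; rewrite subrr mul0r.
Qed.


Lemma lemB (R : comNzRingType) (I : R -> Prop) (idI : is_ideal I)
  (f g r e : {poly R}) (m j : nat) :
  f ^+ m = r * g + e -> Ip I e ->
  forall n, exists u w, f ^+ ((m * j + j) * n) = u * (f * g) ^+ j + w /\ Ep I n w.
Proof.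
move=> Hm He.
have [u0 [w0 [E0 Hw0]]] : exists u w, f ^+ (m * j + j) = u * (f * g) ^+ j + w /\ Ip I w.
  have := subrXX (r * g + e) (r * g) j.
  set S := \sum_(i < j) _ => HS.
  exists (r ^+ j), (S * f ^+ j * e); split; last exact: IpMl.
  rewrite exprD exprM Hm.
  rewrite -(subrK ((r * g) ^+ j) ((r * g + e) ^+ j)) HS.
  rewrite addrC (addrC (r * g)) addrK !exprMn; ring.
elim=> [|n [u [w [E Hw]]]].
  exists 0, 1; split; first by rewrite muln0 expr0 mul0r add0r.
  by move=> i; apply: ipow_O.
exists (u * (u0 * (f * g) ^+ j + w0) + w * u0), (w * w0); split; last exact: EpM1.
rewrite mulnS exprD E0 E; ring.
Qed.

Theorem proposition3p2 (R : comNzRingType) (f g : {poly R}) :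
  f \is monic -> g \is monic -> implies_R f g -> rho_injective f g.
Proof.
move=> mf mg [I [m [idI Hsep [r [e [Hm He]]]]]] x y Hx Hy Hxy j.
set N := (m * j + j)%N.
have mH : ((f * g) ^+ j) \is monic by apply: monic_exp; rewrite monicMl.
apply: (lemD mH Hsep) => n.
have [u [w [Euw Hw]]] := lemB idI j Hm He n.
have [a Ha] := compat_le Hx (leq_addr (N * n) j).
have [b Hb] := compat_le Hy (leq_addr (N * n) j).
have [c Hc] := Hxy (j + N * n)%N.
exists (c * f ^+ j * u - a + b), (c * f ^+ j * w); split; last exact: EpMl.
have -> : x j - y j = (x (j + N * n)%N - y (j + N * n)%N)
   - (x (j + N * n)%N - x j) + (y (j + N * n)%N - y j) by ring.
rewrite Hc Ha Hb exprD Euw; ring.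
Qed.
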